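(* Let $\Gamma$ be the middle-third Cantor set. Then: (1) the set of all uniformly perfect metrics in $\mathrm{Met}(\Gamma)$ is a dense $F_\sigma$ subset of $(\mathrm{Met}(\Gamma),\mathcal{D}_\Gamma)$; (2) the set of all non-uniformly perfect metrics in $\mathrm{Met}(\Gamma)$ is a dense $G_\delta$ subset of $(\mathrm{Met}(\Gamma),\mathcal{D}_\Gamma)$.
   Context: For a metrizable space $X$, $\mathrm{Met}(X)$ is the set of all metrics on $X$ generating its topology, with the (possibly $\infty$-valued) metric $\mathcal{D}_X(d,e)=\sup_{x,y\in X}|d(x,y)-e(x,y)|$. For $c\in(0,1)$, a metric space $(X,d)$ is $c$-uniformly perfect if for every $x\in X$ and every $r\in(0,\delta_d(X))$ (where $\delta_d(X)$ is the diameter) there is $y\in X$ with $c r\le d(x,y)\le r$; it is uniformly perfect if it is $c$-uniformly perfect for some $c\in(0,1)$. $F_\sigma$: countable union of closed sets; $G_\delta$: countable intersection of open sets. *)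

(* Defs.v *)
From Stdlib Require Import Reals.
Open Scope R_scope.

(* Middle-third Cantor set: Gamma = \bigcap_n C_n, C_0 = [0,1],
   C_{n+1} = C_n/3 \cup (2/3 + C_n/3). *)
Fixpoint cantor_stage (n : nat) (x : R) : Prop :=
  match n with
  | O => 0 <= x <= 1
  | S m => cantor_stage m (3 * x) \/ cantor_stage m (3 * x - 2)
  end.

Definition in_cantor (x : R) : Prop := forall n, cantor_stage n x.

Definition Gamma : Type := {x : R | in_cantor x}.

Definition is_metric (d : Gamma -> Gamma -> R) : Prop :=
  (forall x y, 0 <= d x y) /\
  (forall x y, d x y = 0 <-> x = y) /\
  (forall x y, d x y = d y x) /\
  (forall x y z, d x z <= d x y + d y z).

Definition d_open (d : Gamma -> Gamma -> R) (U : Gamma -> Prop) : Prop :=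
  forall x, U x -> exists eps, 0 < eps /\ forall y, d x y < eps -> U y.

Definition gamma_open (U : Gamma -> Prop) : Prop :=
  forall x, U x -> exists eps, 0 < eps /\
    forall y, Rabs (proj1_sig x - proj1_sig y) < eps -> U y.

Definition Met (d : Gamma -> Gamma -> R) : Prop :=
  is_metric d /\ forall U, d_open d U <-> gamma_open U.

(* D_Gamma(d,e) < eps, where D_Gamma(d,e) = sup_{x,y} |d x y - e x y| in [0,+oo]. *)
Definition D_lt (d e : Gamma -> Gamma -> R) (eps : R) : Prop :=
  exists s, s < eps /\ forall x y, Rabs (d x y - e x y) <= s.

(* Topology on (Met(Gamma), D_Gamma); subsets are predicates contained in Met. *)
Definition Met_open (U : (Gamma -> Gamma -> R) -> Prop) : Prop :=
  (forall d, U d -> Met d) /\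
  forall d, U d -> exists eps, 0 < eps /\ forall e, Met e -> D_lt d e eps -> U e.

Definition Met_closed (F : (Gamma -> Gamma -> R) -> Prop) : Prop :=
  (forall d, F d -> Met d) /\ Met_open (fun d => Met d /\ ~ F d).

Definition Met_dense (A : (Gamma -> Gamma -> R) -> Prop) : Prop :=
  (forall d, A d -> Met d) /\
  forall d eps, Met d -> 0 < eps -> exists e, A e /\ D_lt d e eps.

Definition Met_Fsigma (A : (Gamma -> Gamma -> R) -> Prop) : Prop :=
  exists F : nat -> (Gamma -> Gamma -> R) -> Prop,
    (forall n, Met_closed (F n)) /\ (forall d, A d <-> exists n, F n d).

Definition Met_Gdelta (A : (Gamma -> Gamma -> R) -> Prop) : Prop :=
  exists G : nat -> (Gamma -> Gamma -> R) -> Prop,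
    (forall n, Met_open (G n)) /\ (forall d, A d <-> Met d /\ forall n, G n d).

(* c-uniformly perfect; "r < diam_d(Gamma)" is unfolded as: some distance exceeds r. *)
Definition c_unif_perfect (c : R) (d : Gamma -> Gamma -> R) : Prop :=
  forall x r, 0 < r -> (exists a b, r < d a b) ->
    exists y, c * r <= d x y /\ d x y <= r.

Definition unif_perfect (d : Gamma -> Gamma -> R) : Prop :=
  exists c, 0 < c < 1 /\ c_unif_perfect c d.

(* Main.v *)
Require Import Defs.
From Stdlib Require Import Reals.
From Stdlib Require Import Lra Lia Classical ClassicalEpsilon ProofIrrelevance Rtopology Arith.
Open Scope R_scope.

Lemma stage_01 : forall n x, cantor_stage n x -> 0 <= x <= 1.
Proof.
  induction n; simpl; intros x H; [exact H|].
  destruct H as [H|H]; apply IHn in H; lra.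
Qed.

Lemma cantor_01 : forall x, in_cantor x -> 0 <= x <= 1.
Proof. intros x H; exact (stage_01 0 x (H 0%nat)). Qed.

Lemma cantor_split : forall x, in_cantor x -> x <= 1/3 \/ 2/3 <= x.
Proof.
  intros x H. destruct (H 1%nat) as [H1|H1]; simpl in H1; [left|right]; lra.
Qed.

Lemma cantor_left : forall x, in_cantor x -> x <= 1/3 -> in_cantor (3*x).
Proof.
  intros x H Hx n. destruct (H (S n)) as [H1|H1]; [exact H1|].
  apply stage_01 in H1; lra.
Qed.

Lemma cantor_right : forall x, in_cantor x -> 2/3 <= x -> in_cantor (3*x-2).
Proof.
  intros x H Hx n. destruct (H (S n)) as [H1|H1]; [|exact H1].
  apply stage_01 in H1; lra.
Qed.

Lemma cantor_div3 : forall z, in_cantor z -> in_cantor (z/3).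
Proof.
  intros z H n. destruct n as [|n]; simpl.
  - pose proof (cantor_01 z H); lra.
  - left. replace (3*(z/3)) with z by field. apply H.
Qed.

Lemma cantor_add : forall z, in_cantor z -> in_cantor (2/3 + z/3).
Proof.
  intros z H n. destruct n as [|n]; simpl.
  - pose proof (cantor_01 z H); lra.
  - right. replace (3*(2/3+z/3) - 2) with z by field. apply H.
Qed.

Lemma cantor0 : in_cantor 0.
Proof. intro n; induction n; simpl; [lra|left; replace (3*0) with 0 by ring; exact IHn]. Qed.

Lemma cantor1 : in_cantor 1.
Proof. intro n; induction n; simpl; [lra|right; replace (3*1-2) with 1 by ring; exact IHn]. Qed.

Lemma pow3_pos : forall n, 0 < (/3)^n.
Proof. intro n; apply pow_lt; lra. Qed.

Lemma pow3_le1 : forall n, (/3)^n <= 1.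
Proof. intro n. rewrite <- (pow1 n). apply pow_incr. lra. Qed.

Lemma pow3_S : forall n, (/3)^(S n) = /3 * (/3)^n.
Proof. intro n; reflexivity. Qed.

Lemma pow3_mono : forall m n, (m <= n)%nat -> (/3)^n <= (/3)^m.
Proof.
  intros m n H. replace n with (m + (n-m))%nat by lia. rewrite pow_add.
  pose proof (pow3_pos m); pose proof (pow3_le1 (n-m)); pose proof (pow3_pos (n-m)).
  nra.
Qed.

Lemma cantor_gap : forall m x, in_cantor x -> (/3)^m < x -> 2*(/3)^m <= x.
Proof.
  induction m; intros x H Hx.
  - simpl in Hx. pose proof (cantor_01 x H); lra.
  - rewrite pow3_S in *. destruct (cantor_split x H) as [Hl|Hr].
    + assert (H3 := IHm (3*x) (cantor_left x H Hl)). lra.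
    + pose proof (pow3_le1 m); lra.
Qed.

Lemma stage_closed : forall n l,
  (forall del, 0 < del -> exists z, cantor_stage n z /\ Rabs (z - l) < del) ->
  cantor_stage n l.
Proof.
  induction n; intros l H.
  - simpl. split.
    + destruct (Rle_or_lt 0 l) as [|Hl]; auto.
      destruct (H (-l)) as [z [Hz Hd]]; [lra|]. simpl in Hz.
      apply Rabs_def2 in Hd; lra.
    + destruct (Rle_or_lt l 1) as [|Hl]; auto.
      destruct (H (l-1)) as [z [Hz Hd]]; [lra|]. simpl in Hz.
      apply Rabs_def2 in Hd; lra.
  - simpl. destruct (classic (forall del, 0 < del -> exists z, cantor_stage n (3*z) /\ Rabs (z - l) < del)) as [HA|HA].
    + left. apply IHn. intros del Hd. destruct (HA (del/3)) as [z [Hz Hzl]]; [lra|].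
      exists (3*z); split; auto. replace (3*z - 3*l) with (3*(z-l)) by ring.
      rewrite Rabs_mult, Rabs_pos_eq by lra. lra.
    + right. apply not_all_ex_not in HA. destruct HA as [d0 HA].
      apply imply_to_and in HA. destruct HA as [Hd0 HA].
      apply IHn. intros del Hd. destruct (H (Rmin d0 (del/3))) as [z [Hz Hzl]].
      { apply Rmin_pos; lra. }
      simpl in Hz. destruct Hz as [Hz|Hz].
      * exfalso; apply HA; exists z; split; auto. pose proof (Rmin_l d0 (del/3)); lra.
      * exists (3*z-2); split; auto. replace (3*z-2-(3*l-2)) with (3*(z-l)) by ring.
        rewrite Rabs_mult, Rabs_pos_eq by lra. pose proof (Rmin_r d0 (del/3)); lra.
Qed.

Lemma cantor_closed : forall l,
  (forall del, 0 < del -> exists z, in_cantor z /\ Rabs (z - l) < del) -> in_cantor l.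
Proof.
  intros l H n. apply stage_closed. intros del Hd. destruct (H del Hd) as [z [Hz Hzl]].
  exists z; auto.
Qed.

Definition val (x : Gamma) : R := proj1_sig x.

Lemma gamma_eq : forall x y : Gamma, val x = val y -> x = y.
Proof.
  intros [x hx] [y hy]; unfold val; simpl; intro E; subst; f_equal; apply proof_irrelevance.
Qed.

Definition g0 : Gamma := exist _ 0 cantor0.
Definition g1 : Gamma := exist _ 1 cantor1.

Lemma Met_cont : forall d, Met d -> forall x eps, 0 < eps ->
  exists del, 0 < del /\ forall y, Rabs (val x - val y) < del -> d x y < eps.
Proof.
  intros d [[Hp [H0 [Hs Ht]]] Ho] x eps He.
  assert (Hop : d_open d (fun y => d x y < eps)).
  { intros y Hy. exists (eps - d x y). split; [lra|]. intros z Hz.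
    pose proof (Ht x y z); lra. }
  apply Ho in Hop. destruct (Hop x) as [del [Hd Hdel]].
  { replace (d x x) with 0; [lra|]. symmetry; apply H0; reflexivity. }
  exists del; split; auto.
Qed.

Lemma adh_use : forall un l, ValAdh un l -> forall del N, 0 < del ->
  exists p, (N <= p)%nat /\ Rabs (un p - l) < del.
Proof.
  intros un l H del N Hd.
  destruct (H (disc l (mkposreal del Hd)) N) as [p [Hp Hv]].
  - exists (mkposreal del Hd). intros y Hy; exact Hy.
  - exists p; split; auto.
Qed.

Lemma adh_gamma : forall (ys : nat -> Gamma) l, ValAdh (fun n => val (ys n)) l -> in_cantor l.
Proof.
  intros ys l H. apply cantor_closed. intros del Hd.
  destruct (adh_use _ _ H del 0%nat Hd) as [p [_ Hp]].
  exists (val (ys p)); split; auto. exact (proj2_sig (ys p)).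
Qed.

Lemma seq_adh : forall ys : nat -> Gamma, exists L : Gamma, ValAdh (fun n => val (ys n)) (val L).
Proof.
  intro ys. destruct (Bolzano_Weierstrass (fun n => val (ys n)) (fun c => 0 <= c <= 1) (compact_P3 0 1)) as [l Hl].
  { intro n. apply cantor_01. exact (proj2_sig (ys n)). }
  exists (exist _ l (adh_gamma ys l Hl)). exact Hl.
Qed.

Lemma choose_seq : forall (P : nat -> Gamma -> Prop), (forall n, exists x, P n x) ->
  exists ys : nat -> Gamma, forall n, P n (ys n).
Proof.
  intros P H. exists (fun n => epsilon (inhabits g0) (P n)).
  intro n. apply epsilon_spec. apply H.
Qed.

Lemma Met_bounded : forall d, Met d -> exists B, forall x y, d x y <= B.
Proof.
  intros d Hm.
  assert (Hb : exists B, forall y, d g0 y <= B).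
  { apply NNPP; intro HN.
    assert (Hs : forall n, exists y, INR n < d g0 y).
    { intro n. apply NNPP; intro Hn. apply HN. exists (INR n). intro y.
      apply Rnot_lt_le. intro; apply Hn; exists y; auto. }
    destruct (choose_seq _ Hs) as [ys Hys].
    destruct (seq_adh ys) as [L HL].
    destruct (Met_cont d Hm L 1) as [del [Hd Hdel]]; [lra|].
    destruct (INR_archimed 1 (d g0 L + 1)) as [N HN']; [lra|].
    destruct (adh_use _ _ HL del N Hd) as [p [Hp Hpl]].
    assert (h1 : d L (ys p) < 1) by (apply Hdel; rewrite Rabs_minus_sym; exact Hpl).
    destruct Hm as [[Hp0 [H0 [Hs' Ht]]] _].
    pose proof (Ht g0 L (ys p)). pose proof (Hys p).
    apply le_INR in Hp. lra. }
  destruct Hb as [B HB]. exists (2*B). intros x y.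
  destruct Hm as [[Hp0 [H0 [Hs' Ht]]] _].
  pose proof (Ht x g0 y). pose proof (HB x). pose proof (HB y). rewrite (Hs' x g0) in *. lra.
Qed.

Fixpoint piR (K : nat) (x : R) : R :=
  match K with
  | O => 0
  | S k => if Rle_dec x (1/3) then piR k (3*x) / 3 else 2/3 + piR k (3*x-2) / 3
  end.

Lemma piR_in : forall K x, in_cantor x -> in_cantor (piR K x).
Proof.
  induction K; intros x H; simpl; [exact cantor0|].
  destruct (Rle_dec x (1/3)) as [h|h].
  - apply cantor_div3, IHK, cantor_left; auto.
  - destruct (cantor_split x H); [lra|]. apply cantor_add, IHK, cantor_right; auto.
Qed.

Lemma piR_close : forall K x, in_cantor x -> Rabs (piR K x - x) <= (/3)^K.
Proof.
  induction K; intros x H; simpl.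
  - pose proof (cantor_01 x H). rewrite Rabs_left1 by lra. lra.
  - destruct (Rle_dec x (1/3)) as [h|h].
    + pose proof (IHK _ (cantor_left x H h)).
      replace (piR K (3*x)/3 - x) with (/3 * (piR K (3*x) - 3*x)) by field.
      rewrite Rabs_mult, (Rabs_pos_eq (/3)) by lra. lra.
    + destruct (cantor_split x H); [lra|].
      pose proof (IHK _ (cantor_right x H H0)).
      replace (2/3 + piR K (3*x-2)/3 - x) with (/3 * (piR K (3*x-2) - (3*x-2))) by field.
      rewrite Rabs_mult, (Rabs_pos_eq (/3)) by lra. lra.
Qed.

Lemma piR_loc : forall K x y, in_cantor x -> in_cantor y -> Rabs (x - y) < (/3)^K ->
  piR K x = piR K y.
Proof.
  induction K; intros x y Hx Hy Hxy; simpl; auto.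
  pose proof (pow3_le1 K). rewrite pow3_S in Hxy.
  destruct (cantor_split x Hx) as [hx|hx]; destruct (cantor_split y Hy) as [hy|hy].
  - destruct (Rle_dec x (1/3)); [|lra]. destruct (Rle_dec y (1/3)); [|lra].
    f_equal. apply IHK; try apply cantor_left; auto.
    replace (3*x-3*y) with (3*(x-y)) by ring. rewrite Rabs_mult, Rabs_pos_eq by lra. lra.
  - exfalso. apply Rabs_def2 in Hxy. lra.
  - exfalso. apply Rabs_def2 in Hxy. lra.
  - destruct (Rle_dec x (1/3)); [lra|]. destruct (Rle_dec y (1/3)); [lra|].
    f_equal. f_equal. apply IHK; try apply cantor_right; auto.
    replace (3*x-2-(3*y-2)) with (3*(x-y)) by ring. rewrite Rabs_mult, Rabs_pos_eq by lra. lra.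
Qed.

Definition pi (K : nat) (x : Gamma) : Gamma :=
  exist _ (piR K (val x)) (piR_in K (val x) (proj2_sig x)).

Lemma pi_close : forall K x, Rabs (val (pi K x) - val x) <= (/3)^K.
Proof. intros K x. apply piR_close. exact (proj2_sig x). Qed.

Lemma pi_loc : forall K x y, Rabs (val x - val y) < (/3)^K -> pi K x = pi K y.
Proof.
  intros K x y H. apply gamma_eq. unfold pi, val; simpl. apply piR_loc; auto.
  exact (proj2_sig x). exact (proj2_sig y).
Qed.

Lemma small_pow : forall eps, 0 < eps -> exists N, forall n, (N <= n)%nat -> (/3)^n < eps.
Proof.
  intros eps He. destruct (pow_lt_1_zero (/3)) with (y := eps) as [N HN]; auto.
  { rewrite Rabs_pos_eq; lra. }
  exists N. intros n Hn. specialize (HN n Hn). rewrite Rabs_pos_eq in HN; auto.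
  left; apply pow3_pos.
Qed.

Lemma Met_unif : forall d, Met d -> forall eta, 0 < eta ->
  exists K, forall x, d x (pi K x) < eta.
Proof.
  intros d Hm eta He. apply NNPP; intro HN.
  assert (Hs : forall n, exists x, eta <= d x (pi n x)).
  { intro n. apply NNPP; intro Hn. apply HN. exists n. intro x.
    apply Rnot_le_lt. intro; apply Hn; exists x; auto. }
  destruct (choose_seq _ Hs) as [ys Hys].
  destruct (seq_adh ys) as [L HL].
  destruct (Met_cont d Hm L (eta/2)) as [del [Hd Hdel]]; [lra|].
  destruct (small_pow (del/2)) as [N HN']; [lra|].
  destruct (adh_use _ _ HL (del/2) N) as [p [Hp Hpl]]; [lra|].
  assert (h1 : d L (ys p) < eta/2) by (apply Hdel; rewrite Rabs_minus_sym; lra).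
  assert (h2 : d L (pi p (ys p)) < eta/2).
  { apply Hdel. pose proof (pi_close p (ys p)). specialize (HN' p Hp).
    rewrite Rabs_minus_sym.
    replace (val (pi p (ys p)) - val L) with ((val (pi p (ys p)) - val (ys p)) + (val (ys p) - val L)) by ring.
    pose proof (Rabs_triang (val (pi p (ys p)) - val (ys p)) (val (ys p) - val L)). lra. }
  destruct Hm as [[Hp0 [H0 [Hs' Ht]]] _].
  pose proof (Ht (ys p) L (pi p (ys p))). rewrite (Hs' (ys p) L) in *. pose proof (Hys p). lra.
Qed.

Lemma sibling : forall k x, in_cantor x -> exists y, in_cantor y /\
  (/3)^(S k) <= Rabs (x - y) <= (/3)^k.
Proof.
  induction k; intros x H.
  - simpl. pose proof (cantor_01 x H). destruct (cantor_split x H).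
    + exists 1; split; [exact cantor1|]. rewrite Rabs_left by lra. lra.
    + exists 0; split; [exact cantor0|]. rewrite Rabs_pos_eq by lra. lra.
  - rewrite !pow3_S. destruct (cantor_split x H) as [h|h].
    + destruct (IHk _ (cantor_left x H h)) as [y' [Hy' Hd]]. rewrite pow3_S in Hd.
      exists (y'/3); split; [apply cantor_div3; auto|].
      replace (x - y'/3) with (/3 * (3*x - y')) by field.
      rewrite Rabs_mult, (Rabs_pos_eq (/3)) by lra. lra.
    + destruct (IHk _ (cantor_right x H h)) as [y' [Hy' Hd]]. rewrite pow3_S in Hd.
      exists (2/3 + y'/3); split; [apply cantor_add; auto|].
      replace (x - (2/3 + y'/3)) with (/3 * (3*x - 2 - y')) by field.
      rewrite Rabs_mult, (Rabs_pos_eq (/3)) by lra. lra.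
Qed.

Lemma euclid_up_n : forall n s, (/3)^n < s -> s <= 1 -> forall x, in_cantor x ->
  exists y, in_cantor y /\ s/9 <= Rabs (x - y) < s.
Proof.
  induction n; intros s Hs Hs1 x Hx.
  - simpl in Hs; lra.
  - destruct (Rlt_or_le ((/3)^n) s) as [h|h]; [apply IHn; auto|].
    destruct (sibling (S n) x Hx) as [y [Hy Hd]]. exists y; split; auto.
    rewrite !pow3_S in *. lra.
Qed.

Lemma euclid_up : forall s, 0 < s -> s <= 1 -> forall x : Gamma,
  exists y : Gamma, s/9 <= Rabs (val x - val y) < s.
Proof.
  intros s Hs Hs1 x. destruct (small_pow s Hs) as [N HN].
  destruct (euclid_up_n N s (HN N (le_n N)) Hs1 (val x) (proj2_sig x)) as [y [Hy Hd]].
  exists (exist _ y Hy). exact Hd.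
Qed.

Lemma val01 : forall x : Gamma, 0 <= val x <= 1.
Proof. intro x; apply cantor_01; exact (proj2_sig x). Qed.

Lemma dist01 : forall x y : Gamma, Rabs (val x - val y) <= 1.
Proof.
  intros x y. pose proof (val01 x); pose proof (val01 y). apply Rabs_le. lra.
Qed.

Section UPdense.
Variable d : Gamma -> Gamma -> R.
Hypothesis Hm : Met d.
Variable eps : R.
Hypothesis He : 0 < eps.
Variable K : nat.
Hypothesis HK : forall x, d x (pi K x) < eps/4.
Variable B : R.
Hypothesis HB : forall x y, d x y <= B.

Definition eUP (x y : Gamma) : R := d (pi K x) (pi K y) + eps/4 * Rabs (val x - val y).

Lemma eUP_metric : is_metric eUP.
Proof.
  destruct Hm as [[Hp [H0 [Hs Ht]]] _]. unfold eUP.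
  split; [|split; [|split]].
  - intros x y. pose proof (Hp (pi K x) (pi K y)). pose proof (Rabs_pos (val x - val y)). nra.
  - intros x y; split; intro E.
    + pose proof (Hp (pi K x) (pi K y)). pose proof (Rabs_pos (val x - val y)).
      assert (HA : Rabs (val x - val y) = 0) by nra.
      apply gamma_eq. destruct (Req_dec (val x - val y) 0) as [Hq|Hq]; [lra|].
      exfalso; apply Rabs_no_R0 in Hq; auto.
    + subst. rewrite Rminus_diag, Rabs_R0. replace (d (pi K y) (pi K y)) with 0; [ring|].
      symmetry; apply H0; auto.
  - intros x y. rewrite Hs, Rabs_minus_sym. reflexivity.
  - intros x y z. pose proof (Ht (pi K x) (pi K y) (pi K z)).
    pose proof (Rabs_triang (val x - val y) (val y - val z)) as Htr.
    replace (val x - val y + (val y - val z)) with (val x - val z) in Htr by ring. nra.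
Qed.

Lemma d_self : forall x, d x x = 0.
Proof. destruct Hm as [[Hp [H0 _]] _]. intro x; apply H0; auto. Qed.

Lemma eUP_same : forall x y, Rabs (val x - val y) < (/3)^K -> eUP x y = eps/4 * Rabs (val x - val y).
Proof. intros x y H. unfold eUP. rewrite (pi_loc K x y H), d_self. ring. Qed.

Lemma eUP_Met : Met eUP.
Proof.
  split; [exact eUP_metric|]. intro U; split; intros HU x Hx.
  - destruct (HU x Hx) as [e0 [He0 Hb]].
    exists (Rmin ((/3)^K) (e0 / (eps/4))). split.
    { apply Rmin_pos; [apply pow3_pos|]. apply Rdiv_lt_0_compat; lra. }
    intros y Hy. apply Hb. pose proof (Rmin_l ((/3)^K) (e0 / (eps/4))).
    pose proof (Rmin_r ((/3)^K) (e0 / (eps/4))).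
    rewrite eUP_same by (unfold val; lra).
    assert (Rabs (val x - val y) < e0 / (eps/4)) by (unfold val; lra).
    apply (Rmult_lt_compat_l (eps/4)) in H1; [|lra].
    replace (eps/4 * (e0/(eps/4))) with e0 in H1 by (field; lra). exact H1.
  - destruct (HU x Hx) as [e0 [He0 Hb]]. exists (eps/4 * e0). split; [nra|].
    intros y Hy. apply Hb. destruct Hm as [[Hp _] _]. unfold eUP in Hy.
    pose proof (Hp (pi K x) (pi K y)).
    assert (eps/4 * Rabs (val x - val y) < eps/4 * e0) by lra.
    apply Rmult_lt_reg_l in H0; [exact H0|lra].
Qed.

Lemma eUP_close : D_lt d eUP eps.
Proof.
  exists (3*eps/4). split; [lra|]. intros x y.
  destruct Hm as [[Hp [H0 [Hs Ht]]] _]. unfold eUP.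
  pose proof (Ht x (pi K x) y). pose proof (Ht (pi K x) (pi K y) y).
  pose proof (Ht (pi K x) x (pi K y)). pose proof (Ht x y (pi K y)).
  pose proof (HK x). pose proof (HK y). rewrite (Hs (pi K y) y) in *.
  rewrite (Hs (pi K x) x) in *.
  pose proof (dist01 x y). pose proof (Rabs_pos (val x - val y)).
  assert (0 <= eps/4 * Rabs (val x - val y) <= eps/4) by (split; nra).
  apply Rabs_le. lra.
Qed.

Lemma eUP_up : unif_perfect eUP.
Proof.
  set (s0 := eps/4 * (/3)^K).
  set (M := B + eps/4).
  assert (Hs0 : 0 < s0) by (unfold s0; pose proof (pow3_pos K); nra).
  assert (HeM : forall x y, eUP x y <= M).
  { intros x y. unfold eUP, M. pose proof (HB (pi K x) (pi K y)). pose proof (dist01 x y). nra. }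
  assert (HM : 0 <= M).
  { pose proof (HeM g0 g0). pose proof (eUP_metric) as [Hp _]. pose proof (Hp g0 g0). lra. }
  exists (s0 / (9 * (M + s0))). split.
  { split; [apply Rdiv_lt_0_compat; lra|].
    apply (Rmult_lt_reg_r (9*(M+s0))); [lra|]. unfold Rdiv. rewrite Rmult_assoc, Rinv_l by lra. lra. }
  intros x r Hr [a [b Hab]].
  assert (HrM : r < M) by (pose proof (HeM a b); lra).
  assert (Hc : s0 / (9*(M+s0)) * r <= s0/9).
  { unfold Rdiv. rewrite Rinv_mult. 
    assert (r * / (M+s0) <= 1).
    { apply (Rmult_le_reg_r (M+s0)); [lra|]. rewrite Rmult_assoc, Rinv_l by lra. lra. }
    pose proof (Rinv_0_lt_compat 9). nra. }
  pose proof (pow3_le1 K). pose proof (pow3_pos K).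
  destruct (Rle_or_lt r s0) as [h|h].
  - destruct (euclid_up (r / (eps/4))) with (x := x) as [y [Hy1 Hy2]].
    { apply Rdiv_lt_0_compat; lra. }
    { apply (Rmult_le_reg_l (eps/4)); [lra|]. replace (eps/4 * (r/(eps/4))) with r by (field; lra).
      unfold s0 in h. nra. }
    assert (Hloc : Rabs (val x - val y) < (/3)^K).
    { assert (r/(eps/4) <= (/3)^K); [|lra].
      apply (Rmult_le_reg_l (eps/4)); [lra|]. replace (eps/4 * (r/(eps/4))) with r by (field; lra).
      unfold s0 in h; lra. }
    exists y. rewrite eUP_same by exact Hloc.
    assert (E : eps/4 * (r / (eps/4)) = r) by (field; lra).
    split.
    + assert (s0 / (9*(M+s0)) * r <= r/9).
      { unfold Rdiv at 1. rewrite Rinv_mult.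
        assert (s0 * / (M+s0) <= 1).
        { apply (Rmult_le_reg_r (M+s0)); [lra|]. rewrite Rmult_assoc, Rinv_l by lra. lra. }
        assert (0 < s0 * / (M+s0)) by (apply Rmult_lt_0_compat; [lra|apply Rinv_0_lt_compat; lra]).
        pose proof (Rinv_0_lt_compat 9). nra. }
      nra.
    + nra.
  - destruct (euclid_up ((/3)^K)) with (x := x) as [y [Hy1 Hy2]]; auto.
    exists y. rewrite eUP_same by exact Hy2. unfold s0 in *. split; nra.
Qed.

End UPdense.

Lemma UP_dense : Met_dense (fun d => Met d /\ unif_perfect d).
Proof.
  split; [intros d [H _]; exact H|].
  intros d eps Hm He.
  destruct (Met_unif d Hm (eps/4)) as [K HK]; [lra|].
  destruct (Met_bounded d Hm) as [B HB].
  exists (eUP d eps K). split; [split|].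
  - apply eUP_Met; auto.
  - apply eUP_up with (B := B); auto.
  - apply eUP_close; auto.
Qed.

Lemma abs_le_inv : forall x s, Rabs x <= s -> -s <= x <= s.
Proof.
  intros x s H. destruct (Rle_or_lt 0 x).
  - rewrite Rabs_pos_eq in H; lra.
  - rewrite Rabs_left in H; lra.
Qed.

Definition AP (c : R) (d : Gamma -> Gamma -> R) : Prop :=
  forall del x r, 0 < del -> 0 < r -> (exists a b, r < d a b) ->
    exists y, c * r - del <= d x y <= r + del.

Definition cn (n : nat) : R := / INR (S (S n)).

Lemma cn_bounds : forall n, 0 < cn n < 1.
Proof.
  intro n. unfold cn. rewrite !S_INR. pose proof (pos_INR n).
  split; [apply Rinv_0_lt_compat; lra|].
  rewrite <- Rinv_1. apply Rinv_lt_contravar; lra.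
Qed.

Definition Fn (n : nat) (d : Gamma -> Gamma -> R) : Prop := Met d /\ AP (cn n) d.

Lemma UP_AP : forall c d, c_unif_perfect c d -> AP c d.
Proof.
  intros c d H del x r Hd Hr Hab. destruct (H x r Hr Hab) as [y Hy]. exists y; lra.
Qed.

Lemma AP_UP : forall c d, 0 < c < 1 -> AP c d -> c_unif_perfect (c/2) d.
Proof.
  intros c d Hc H x r Hr [a [b Hab]].
  destruct (H (c*r/4) x (r - c*r/4)) as [y Hy].
  - nra.
  - nra.
  - exists a, b. nra.
  - exists y. split; [|lra].
    assert (Hcr : 0 < c*r) by nra.
    assert (c*c*r <= c*r).
    { pose proof (Rmult_le_pos (c*r) (1-c)) as Hq. assert (0 <= (c*r)*(1-c)) by (apply Hq; lra). nra. }
    assert (E : c * (r - c*r/4) - c*r/4 = c*r - c*c*r/4 - c*r/4) by field.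
    lra.
Qed.

Lemma UP_iff : forall d, (Met d /\ unif_perfect d) <-> exists n, Fn n d.
Proof.
  intro d; split.
  - intros [Hm [c [Hc Hu]]].
    destruct (archimed_cor1 c) as [N [HN HN0]]; [lra|].
    exists N. split; auto. intros del x r Hd Hr Hab.
    destruct (UP_AP c d Hu del x r Hd Hr Hab) as [y Hy]. exists y.
    assert (cn N <= c).
    { unfold cn. left. eapply Rle_lt_trans; [|exact HN].
      apply Rinv_le_contravar; [apply lt_0_INR; lia|]. apply le_INR; lia. }
    nra.
  - intros [n [Hm Ha]]. split; auto. exists (cn n / 2). pose proof (cn_bounds n).
    split; [lra|]. apply AP_UP; auto.
Qed.

Lemma notAP : forall c d, ~ AP c d -> exists del x r a b, 0 < del /\ 0 < r /\ r < d a b /\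
  forall y, ~ (c * r - del <= d x y <= r + del).
Proof.
  intros c d H. apply NNPP; intro HN. apply H. intros del x r Hd Hr [a [b Hab]].
  apply NNPP; intro Hy. apply HN. exists del, x, r, a, b. repeat split; auto.
  intros y Hy'. apply Hy. exists y; auto.
Qed.

Lemma Fn_closed : forall n, Met_closed (Fn n).
Proof.
  intro n. split; [intros d [H _]; exact H|]. split; [intros d [H _]; exact H|].
  intros d [Hm HF].
  assert (HA : ~ AP (cn n) d) by (intro; apply HF; split; auto).
  destruct (notAP _ _ HA) as [del [x [r [a [b [Hd [Hr [Hab Hy]]]]]]]].
  exists (Rmin (del/2) (d a b - r)). split; [apply Rmin_pos; lra|].
  intros e He [s [Hs Hde]]. split; auto. intros [_ HAe].
  pose proof (Rmin_l (del/2) (d a b - r)). pose proof (Rmin_r (del/2) (d a b - r)).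
  destruct (HAe (del/2) x r) as [y Hy']; auto; [lra| |].
  - exists a, b. pose proof (abs_le_inv _ _ (Hde a b)). lra.
  - apply (Hy y). pose proof (abs_le_inv _ _ (Hde x y)). lra.
Qed.

Lemma UP_Fsigma : Met_Fsigma (fun d => Met d /\ unif_perfect d).
Proof.
  exists Fn. split; [exact Fn_closed|]. exact UP_iff.
Qed.

Lemma NUP_Gdelta : Met_Gdelta (fun d => Met d /\ ~ unif_perfect d).
Proof.
  exists (fun n d => Met d /\ ~ Fn n d). split.
  - intro n. exact (proj2 (Fn_closed n)).
  - intro d. split.
    + intros [Hm HN]. split; auto. intro n. split; auto. intro HF. apply HN.
      apply (proj2 (UP_iff d)). exists n; auto.
    + intros [Hm HG]. split; auto. intro HU. destruct (proj1 (UP_iff d) (conj Hm HU)) as [n Hn].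
      apply (HG n); auto.
Qed.

Lemma n_le_fact : forall n, (n <= fact n)%nat.
Proof. induction n; simpl; [lia|]. pose proof (lt_O_fact n). nia. Qed.

Section NUP.
Variable d : Gamma -> Gamma -> R.
Hypothesis Hm : Met d.
Variable eps : R.
Hypothesis He : 0 < eps.

Definition ta : R := eps/2.
Definition t (j : nat) : R := ta / INR (fact j).

Lemma t_pos : forall j, 0 < t j.
Proof. intro j; unfold t, ta. apply Rdiv_lt_0_compat; [lra|apply INR_fact_lt_0]. Qed.

Lemma t_mono : forall i j, (i <= j)%nat -> t j <= t i.
Proof.
  intros i j H. unfold t, ta. unfold Rdiv. apply Rmult_le_compat_l; [lra|].
  apply Rinv_le_contravar; [apply INR_fact_lt_0|]. apply le_INR, fact_le; auto.
Qed.

Lemma t_le_a : forall j, t j <= ta.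
Proof. intro j. pose proof (t_mono 0 j (Nat.le_0_l j)). unfold t in *. simpl in H.
  replace (ta / 1) with ta in H by field. exact H. Qed.

Lemma t_S : forall j, (0 < j)%nat -> t (S j) <= t j / INR j.
Proof.
  intros j Hj. unfold t. rewrite fact_simpl, mult_INR.
  assert (0 < INR j) by (apply lt_0_INR; auto).
  pose proof (INR_fact_lt_0 j). assert (INR j <= INR (S j)) by (apply le_INR; lia).
  unfold ta. unfold Rdiv. rewrite Rinv_mult.
  assert (/ INR (S j) <= / INR j) by (apply Rinv_le_contravar; auto).
  pose proof (Rinv_0_lt_compat _ H0) as HF.
  assert (Hta : 0 < eps/2) by lra.
  assert (0 <= (eps/2 * / INR (fact j)) * (/ INR j - / INR (S j))) by (apply Rmult_le_pos; nra).
  nra.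
Qed.

Lemma t_small : forall eta, 0 < eta -> exists J, t J < eta.
Proof.
  intros eta Heta. destruct (archimed_cor1 (eta/ta)) as [N [HN HN0]].
  { unfold ta; apply Rdiv_lt_0_compat; lra. }
  exists N. unfold t.
  assert (HI : INR N <= INR (fact N)) by (apply le_INR, n_le_fact).
  assert (0 < INR N) by (apply lt_0_INR; auto).
  assert (ta / INR (fact N) <= ta / INR N).
  { unfold Rdiv. apply Rmult_le_compat_l; [unfold ta; lra|]. apply Rinv_le_contravar; auto. }
  assert (ta / INR N < eta).
  { apply (Rmult_lt_compat_l ta) in HN; [|unfold ta; lra].
    replace (ta * (eta/ta)) with eta in HN by (field; unfold ta; lra). exact HN. }
  lra.
Qed.

Lemma mu_ex : forall j, exists m, forall y : Gamma, val y <= (/3)^m -> d g0 y < t j.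
Proof.
  intro j. destruct (Met_cont d Hm g0 (t j) (t_pos j)) as [del [Hd Hdel]].
  destruct (small_pow del Hd) as [N HN]. exists N. intros y Hy. apply Hdel.
  pose proof (val01 y). unfold g0, val in *; simpl in *.
  rewrite Rabs_left1 by lra. specialize (HN N (le_n N)). lra.
Qed.

Definition mu (j : nat) : nat := epsilon (inhabits 0%nat) (fun m => forall y : Gamma, val y <= (/3)^m -> d g0 y < t j).

Lemma mu_spec : forall j y, val y <= (/3)^(mu j) -> d g0 y < t j.
Proof. intro j. unfold mu. apply epsilon_spec. apply mu_ex. Qed.

Fixpoint m (j : nat) : nat := match j with O => O | S k => S (m k + mu (S k)) end.

Lemma m_mono : forall i j, (i <= j)%nat -> (m i <= m j)%nat.
Proof. intros i j H; induction H; simpl; lia. Qed.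

Lemma m_ge : forall j, (j <= m j)%nat.
Proof. induction j; simpl; lia. Qed.

Lemma m_spec : forall j y, val y <= (/3)^(m (S j)) -> d g0 y < t (S j).
Proof.
  intros j y H. apply mu_spec. eapply Rle_trans; [exact H|]. apply pow3_mono. simpl; lia.
Qed.

Definition lev (j : nat) (y : R) : Prop := (/3)^(m (S j)) < y <= (/3)^(m j).

Lemma lev_unique : forall i j y, lev i y -> lev j y -> i = j.
Proof.
  assert (forall i j y, (i < j)%nat -> lev i y -> lev j y -> False).
  { intros i j y Hij [H1 H2] [H3 H4]. pose proof (pow3_mono _ _ (m_mono (S i) j Hij)). lra. }
  intros i j y Hi Hj. destruct (lt_eq_lt_dec i j) as [[h|h]|h]; auto; exfalso; eauto.
Qed.

Lemma lev_exists : forall y, 0 < y <= 1 -> exists j, lev j y.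
Proof.
  intros y Hy. destruct (small_pow y) as [N HN]; [lra|].
  assert (forall n, (/3)^(m n) < y -> exists j, lev j y).
  { induction n; intro H.
    - simpl in H; lra.
    - destruct (Rlt_or_le ((/3)^(m n)) y) as [h|h]; auto.
      exists n; split; auto. }
  apply (H N). eapply Rle_lt_trans; [apply pow3_mono, m_ge|]. apply HN; auto.
Qed.

Definition phi (y : R) : R :=
  match excluded_middle_informative (exists j, lev j y) with
  | left _ => t (epsilon (inhabits 0%nat) (fun j => lev j y))
  | right _ => 0
  end.

Lemma phi_lev : forall j y, lev j y -> phi y = t j.
Proof.
  intros j y H. unfold phi. destruct (excluded_middle_informative _) as [h|h].
  - f_equal. apply (lev_unique _ _ y); [|exact H]. apply epsilon_spec. exact h.
  - exfalso; apply h; exists j; auto.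
Qed.

Lemma phi_0 : phi 0 = 0.
Proof.
  unfold phi. destruct (excluded_middle_informative _) as [[j [h _]]|h]; auto.
  pose proof (pow3_pos (m (S j))); lra.
Qed.

Lemma phi_range : forall y : Gamma, 0 <= phi (val y) <= ta.
Proof.
  intro y. pose proof (val01 y). destruct (Req_dec (val y) 0) as [h|h].
  - rewrite h, phi_0. unfold ta; lra.
  - destruct (lev_exists (val y)) as [j Hj]; [lra|]. rewrite (phi_lev j _ Hj).
    pose proof (t_pos j); pose proof (t_le_a j); lra.
Qed.

Lemma phi_cont : forall (x : Gamma) eta, 0 < eta -> exists del, 0 < del /\
  forall z : Gamma, Rabs (val x - val z) < del -> Rabs (phi (val x) - phi (val z)) < eta.
Proof.
  intros x eta Heta. pose proof (val01 x). destruct (Req_dec (val x) 0) as [h|h].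
  - destruct (t_small eta Heta) as [J HJ]. exists ((/3)^(m J)). split; [apply pow3_pos|].
    intros z Hz. rewrite h in *. rewrite phi_0. pose proof (val01 z).
    rewrite Rabs_left1 in Hz by lra.
    destruct (Req_dec (val z) 0) as [h'|h'].
    + rewrite h', phi_0, Rminus_diag, Rabs_R0; lra.
    + destruct (lev_exists (val z)) as [j Hj]; [lra|]. rewrite (phi_lev j _ Hj).
      assert (J <= j)%nat.
      { destruct (le_lt_dec J j) as [|hl]; auto. exfalso. destruct Hj as [Hj1 _].
        pose proof (pow3_mono _ _ (m_mono (S j) J hl)). lra. }
      pose proof (t_mono _ _ H1). pose proof (t_pos j).
      rewrite Rabs_left by lra. lra.
  - destruct (lev_exists (val x)) as [j Hj]; [lra|].
    exists ((/3)^(m (S j))). split; [apply pow3_pos|]. intros z Hz.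
    assert (Hzj : lev j (val z)).
    { destruct Hj as [Hj1 Hj2].
      pose proof (cantor_gap _ _ (proj2_sig x) Hj1) as G1. fold (val x) in G1.
      apply Rabs_def2 in Hz. split; [lra|].
      destruct (Rle_or_lt (val z) ((/3)^(m j))) as [|hz]; auto. exfalso.
      pose proof (cantor_gap _ _ (proj2_sig z) hz) as G2. fold (val z) in G2.
      pose proof (pow3_mono _ _ (m_mono j (S j) (Nat.le_succ_diag_r j))). lra. }
    rewrite (phi_lev j _ Hj), (phi_lev j _ Hzj), Rminus_diag, Rabs_R0. lra.
Qed.

Definition eN (x y : Gamma) : R := d x y + Rabs (phi (val x) - phi (val y)).

Lemma eN_metric : is_metric eN.
Proof.
  destruct Hm as [[Hp [H0 [Hs Ht]]] _]. unfold eN.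
  split; [|split; [|split]].
  - intros x y. pose proof (Hp x y). pose proof (Rabs_pos (phi (val x) - phi (val y))). lra.
  - intros x y; split; intro E.
    + pose proof (Hp x y). pose proof (Rabs_pos (phi (val x) - phi (val y))).
      apply H0. lra.
    + subst. rewrite Rminus_diag, Rabs_R0. replace (d y y) with 0; [ring|].
      symmetry; apply H0; auto.
  - intros x y. rewrite Hs, Rabs_minus_sym. reflexivity.
  - intros x y z. pose proof (Ht x y z).
    pose proof (Rabs_triang (phi (val x) - phi (val y)) (phi (val y) - phi (val z))) as Htr.
    replace (phi (val x) - phi (val y) + (phi (val y) - phi (val z))) with (phi (val x) - phi (val z)) in Htr by ring.
    lra.
Qed.

Lemma eN_Met : Met eN.
Proof.
  split; [exact eN_metric|]. intro U; split; intros HU.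
  - intros x Hx. destruct (HU x Hx) as [e0 [He0 Hb]].
    destruct (Met_cont d Hm x (e0/2)) as [d1 [Hd1 H1]]; [lra|].
    destruct (phi_cont x (e0/2)) as [d2 [Hd2 H2]]; [lra|].
    exists (Rmin d1 d2). split; [apply Rmin_pos; auto|].
    intros y Hy. apply Hb. pose proof (Rmin_l d1 d2). pose proof (Rmin_r d1 d2).
    unfold eN. assert (A1 := H1 y ltac:(unfold val; lra)).
    assert (A2 := H2 y ltac:(unfold val; lra)). lra.
  - destruct Hm as [Hmet Ho]. apply Ho in HU. intros x Hx. destruct (HU x Hx) as [e0 [He0 Hb]].
    exists e0. split; auto. intros y Hy. apply Hb. unfold eN in Hy.
    pose proof (Rabs_pos (phi (val x) - phi (val y))). lra.
Qed.

Lemma eN_close : D_lt d eN eps.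
Proof.
  exists ta. split; [unfold ta; lra|]. intros x y. unfold eN.
  replace (d x y - (d x y + Rabs (phi (val x) - phi (val y)))) with (- Rabs (phi (val x) - phi (val y))) by ring.
  rewrite Rabs_Ropp, Rabs_Rabsolu. pose proof (phi_range x). pose proof (phi_range y).
  apply Rabs_le. lra.
Qed.

Lemma eN_nup : ~ unif_perfect eN.
Proof.
  intros [c [Hc Hu]].
  destruct (archimed_cor1 (c/4)) as [N [HN HN0]]; [lra|].
  pose proof (t_S N HN0) as HtS. pose proof (t_pos N). pose proof (t_pos (S N)).
  assert (HtN : t (S N) < c/4 * t N).
  { assert (t N / INR N < c/4 * t N); [|lra].
    unfold Rdiv. rewrite Rmult_comm. apply Rmult_lt_compat_r; auto. }
  destruct (Hu g0 (t N / 2)) as [y [Hy1 Hy2]]; [lra| |].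
  - exists g0, g1. unfold eN. 
    assert (Hl : lev 0 (val g1)).
    { unfold lev, val, g1; simpl. split; [|lra].
      pose proof (pow3_mono 1 (S (mu 1))). simpl in H1. assert (1 <= S (mu 1))%nat by lia.
      specialize (H1 H2). lra. }
    rewrite (phi_lev 0 _ Hl). unfold g0, val at 1; simpl. rewrite phi_0.
    pose proof (t_mono 0 N (Nat.le_0_l N)). destruct Hm as [[Hp _] _]. pose proof (Hp g0 g1) as Hq.
    unfold g0 in Hq. rewrite Rabs_left by (pose proof (t_pos 0); lra). lra.
  - assert (E0 : phi (val g0) = 0) by (unfold g0, val; simpl; apply phi_0).
    unfold eN in Hy1, Hy2; rewrite E0 in Hy1, Hy2. pose proof (val01 y).
    destruct (Rle_or_lt (val y) ((/3)^(m (S N)))) as [h|h].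
    + pose proof (m_spec N y h).
      assert (phi (val y) <= t (S N)).
      { destruct (Req_dec (val y) 0) as [h0|h0].
        - rewrite h0, phi_0; lra.
        - destruct (lev_exists (val y)) as [j Hj]; [lra|]. rewrite (phi_lev j _ Hj).
          apply t_mono. destruct (le_lt_dec (S N) j) as [|hl]; auto. exfalso.
          destruct Hj as [Hj1 _]. pose proof (pow3_mono _ _ (m_mono (S j) (S N) hl)). lra. }
      pose proof (phi_range y). rewrite Rabs_left1 in Hy1 by lra. nra.
    + destruct (lev_exists (val y)) as [j Hj]; [pose proof (pow3_pos (m (S N))); lra|].
      rewrite (phi_lev j _ Hj) in Hy2.
      assert (j <= N)%nat.
      { destruct (le_lt_dec j N) as [|hl]; auto. exfalso. destruct Hj as [_ Hj2].
        pose proof (pow3_mono _ _ (m_mono (S N) j hl)). lra. }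
      pose proof (t_mono _ _ H2). pose proof (t_pos j). rewrite Rabs_left in Hy2 by lra.
      destruct Hm as [[Hp _] _]. pose proof (Hp g0 y). lra.
Qed.

End NUP.

Lemma NUP_dense : Met_dense (fun d => Met d /\ ~ unif_perfect d).
Proof.
  split; [intros d [H _]; exact H|].
  intros d eps Hm He. exists (eN d eps). split; [split|].
  - apply eN_Met; auto.
  - apply eN_nup; auto.
  - apply eN_close; auto.
Qed.

Theorem theorem1p5 :
  (Met_dense (fun d => Met d /\ unif_perfect d) /\
   Met_Fsigma (fun d => Met d /\ unif_perfect d)) /\
  (Met_dense (fun d => Met d /\ ~ unif_perfect d) /\
   Met_Gdelta (fun d => Met d /\ ~ unif_perfect d)).
Proof.
  split; split.
  - exact UP_dense.
  - exact UP_Fsigma.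
  - exact NUP_dense.
  - exact NUP_Gdelta.
Qed.
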